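(* Let $(\lambda_n)_{n\ge1}$ be real numbers with $\lambda_n\in(0,1)$ for all $n$, such that $\sum_{n=1}^\infty\lambda_n=\infty$ and $$\sum_{j=1}^n\frac{\prod_{k=1}^n(1-\lambda_k)}{1-\lambda_j}\to0\quad\text{as }n\to\infty.$$ Let $(a_n)_{n\ge1}$ be a nonnegative sequence satisfying $a_n\le(1-\lambda_n)a_{n-1}+\prod_{k=1}^n(1-\lambda_k)$ for all $n\ge2$. Then $\lim_{n\to\infty}a_n=0$. *)

(* Defs.v *)
(* concrete reals R. Sequences are functions nat -> R;
   only indices n >= 1 are meaningful (values at 0 are ignored). *)
From Stdlib Require Import Reals.
Open Scope R_scope.

Fixpoint sum1 (f : nat -> R) (n : nat) : R :=
  match n with
  | O => 0
  | S m => sum1 f m + f (S m)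
  end.

Fixpoint prod1 (f : nat -> R) (n : nat) : R :=
  match n with
  | O => 1
  | S m => prod1 f m * f (S m)
  end.

(* Main.v *)
Require Import Defs.
From Stdlib Require Import Reals Lra Lia.
Open Scope R_scope.

Lemma prod_pos (lam : nat -> R)
  (hlam : forall n : nat, (1 <= n)%nat -> 0 < lam n < 1) :
  forall n, 0 < prod1 (fun k => 1 - lam k) n.
Proof.
  induction n as [|n IH]; simpl. lra.
  assert (H := hlam (S n) ltac:(lia)). apply Rmult_lt_0_compat; lra.
Qed.

Lemma sum_ge (f : nat -> R) (x : R) :
  forall n, (forall j, (1 <= j <= n)%nat -> x <= f j) -> INR n * x <= sum1 f n.
Proof.
  induction n as [|n IH]; intros H; simpl sum1. simpl INR; lra.
  rewrite S_INR.
  assert (H1 := H (S n) ltac:(lia)).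
  assert (H2 : INR n * x <= sum1 f n) by (apply IH; intros; apply H; lia).
  lra.
Qed.

Theorem lemma3p1 (lam a : nat -> R)
  (hlam : forall n : nat, (1 <= n)%nat -> 0 < lam n < 1)
  (hdiv : cv_infty (fun n => sum1 lam n))
  (hsum : Un_cv (fun n => sum1 (fun j => prod1 (fun k => 1 - lam k) n / (1 - lam j)) n) 0)
  (ha_nonneg : forall n : nat, (1 <= n)%nat -> 0 <= a n)
  (hrec : forall n : nat, (2 <= n)%nat ->
     a n <= (1 - lam n) * a (n - 1)%nat + prod1 (fun k => 1 - lam k) n) :
  Un_cv a 0.
Proof.
  set (Pr := fun n => prod1 (fun k => 1 - lam k) n).
  assert (HP : forall n, 0 < Pr n) by (intro; apply prod_pos; auto).
  set (c := a 1%nat / Pr 1%nat).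
  assert (Hc : 0 <= c).
  { unfold c. apply Rmult_le_pos. apply ha_nonneg; lia.
    apply Rlt_le, Rinv_0_lt_compat, HP. }
  assert (Hb : forall n, (1 <= n)%nat -> a n <= Pr n * (c + INR n)).
  { induction n as [|n IH]; intros Hn. lia.
    destruct n as [|n].
    - unfold c. simpl INR. assert (HP1 := HP 1%nat).
      replace (Pr 1%nat * (a 1%nat / Pr 1%nat + 1)) with (a 1%nat + Pr 1%nat) by (field; lra). lra.
    - assert (IH' := IH ltac:(lia)).
      assert (Hr := hrec (S (S n)) ltac:(lia)).
      replace (S (S n) - 1)%nat with (S n) in Hr by lia.
      assert (Hl := hlam (S (S n)) ltac:(lia)).
      assert (E : Pr (S (S n)) = Pr (S n) * (1 - lam (S (S n)))) by reflexivity.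
      change (prod1 (fun k => 1 - lam k) (S (S n))) with (Pr (S (S n))) in Hr. rewrite E. rewrite (S_INR (S n)).
      assert ((1 - lam (S (S n))) * a (S n) <= (1 - lam (S (S n))) * (Pr (S n) * (c + INR (S n)))).
      { apply Rmult_le_compat_l; lra. }
      rewrite E in Hr. nra. }
  assert (HS : forall n, (1 <= n)%nat ->
     INR n * Pr n <= sum1 (fun j => prod1 (fun k => 1 - lam k) n / (1 - lam j)) n).
  { intros n Hn. apply sum_ge. intros j Hj.
    assert (Hl := hlam j ltac:(lia)). assert (HPn := HP n).
    change (prod1 (fun k => 1 - lam k) n) with (Pr n). unfold Rdiv.
    rewrite <- (Rmult_1_r (Pr n)) at 1. apply Rmult_le_compat_l. lra.
    rewrite <- Rinv_1. apply Rinv_le_contravar; lra. }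
  intros eps Heps.
  destruct (hsum (eps / (c + 1))) as [N HN].
  { apply Rdiv_lt_0_compat; lra. }
  exists (max N 1). intros n Hn.
  assert (Hn1 : (1 <= n)%nat) by lia.
  specialize (HN n ltac:(lia)). unfold R_dist in *. rewrite Rminus_0_r in *.
  assert (H0 := ha_nonneg n Hn1). assert (H1 := Hb n Hn1). assert (H2 := HS n Hn1).
  assert (HPn := HP n).
  assert (HIn : 1 <= INR n) by (apply (le_INR 1); auto).
  assert (H6 : 0 <= INR n * Pr n) by nra.
  rewrite Rabs_right in HN by lra. rewrite Rabs_right by lra.
  assert (H5 : c * Pr n <= c * (INR n * Pr n)) by (apply Rmult_le_compat_l; nra).
  assert (H3 : a n <= (c + 1) * (INR n * Pr n)) by nra.
  assert (H4 : (c + 1) * (INR n * Pr n) < (c+1) * (eps / (c + 1))).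
  { apply Rmult_lt_compat_l; lra. }
  replace ((c+1) * (eps / (c + 1))) with eps in H4 by (field; lra). lra.
Qed.
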